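(* Let $q$ be a prime power, let $k \ge 2$, let $0 < \varepsilon < 1$, let $\eta \ge 600$, and let $\mathcal{C} \subseteq \mathbb{F}_q^n$ be a linear code of dimension $k$. Let $b \ge 1$ be an integer such that every nonzero codeword of $\mathcal{C}$ has weight at least $b$, and such that for every integer $\alpha \ge 1$ the number of codewords of weight at most $\alpha b$ is at most $(qk)^{\alpha}$. Let $p = \frac{\eta \log_2(k)\log_2(q)}{b \varepsilon^2}$ and assume $p \le 1$. Sample each coordinate $i \in [n]$ independently with probability $p$, and give each sampled coordinate weight $1/p$; let $S$ be the set of sampled coordinates. Then with probability at least $1 - 2^{-(0.19\eta - 110)\log_2 k} \cdot k^{-101}$, for every $c \in \mathcal{C}$, $$(1-\varepsilon)\mathrm{wt}(c) \le \tfrac{1}{p} \,\mathrm{wt}(c|_S) \le (1+\varepsilon)\mathrm{wt}(c).$$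
   Context: $\mathrm{wt}(c)$ is the number of nonzero coordinates of $c$, and $c|_S=(c_i)_{i\in S}$. *)

(* Defs.v *)
From HB Require Import structures.
From mathcomp Require Import all_boot all_order all_algebra all_field.
From mathcomp Require Import reals exp.
Set Implicit Arguments. Unset Strict Implicit. Unset Printing Implicit Defensive.
Import Order.TTheory GRing.Theory Num.Theory.
Local Open Scope ring_scope.

Definition wt (F : finFieldType) (n : nat) (c : 'rV[F]_n) : nat :=
  #|[set i : 'I_n | c 0 i != 0]|.

Definition wt_on (F : finFieldType) (n : nat) (S : {set 'I_n}) (c : 'rV[F]_n) : nat :=
  #|[set i in S | c 0 i != 0]|.

(* Probability that the random set S (each i in [n] independently with
   probability p) satisfies E. *)
Definition sample_prob (R : realType) (n : nat) (p : R) (E : pred {set 'I_n}) : R :=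
  \sum_(S : {set 'I_n} | E S) p ^+ #|S| * (1 - p) ^+ (n - #|S|).

Definition log2 (R : realType) (x : R) : R := ln x / ln 2.

(* Main.v *)
Require Import Defs.
From HB Require Import structures.
From mathcomp Require Import all_boot all_order all_algebra all_field.
From mathcomp Require Import reals sequences exp lra ring.
Import Order.TTheory GRing.Theory Num.Theory.
Local Open Scope ring_scope.

Section Scal.
Variable R : realType.
Implicit Types t : R.

Lemma expN_le t : 0 <= t -> expR (- t) <= 1 - t + t ^+ 2.
Proof.
move=> t0; have h1 := expR_ge1Dx t; have h2 := expRxMexpNx_1 t.
have h3 := expR_gt0 (- t); have h4 : 0 <= t ^+ 3 by rewrite exprn_ge0.
rewrite expr2 in h4 *; rewrite exprS expr2 in h4. nra.
Qed.

Lemma expP_le t : 0 <= t <= 1/3 -> expR t <= 1 + t + 3/2 * t ^+ 2.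
Proof.
case/andP=> t0 t1; have h1 := expR_ge1Dx (- t); have h2 := expRxMexpNx_1 t.
have h3 := expR_gt0 t; have h4 : 0 <= t ^+ 2 * (1 - 3 * t).
  rewrite mulr_ge0 ?exprn_ge0 //; lra.
rewrite expr2 in h4 *. nra.
Qed.

Lemma ln2_le : ln (2 : R) <= 17/20.
Proof.
have e : expR (17/20 : R) = expR (17/40) ^+ 2 by rewrite -expRM_natr; congr expR; lra.
have h := expR_ge1Dx (17/40 : R).
have h2 : (2:R) <= expR (17/20).
  rewrite e expr2; have h0 : (0:R) <= 1 + 17/40 by lra. nra.
rewrite -[X in _ <= X]expRK ler_ln ?posrE ?expR_gt0 //.
Qed.

Lemma ln2_gt0 : 0 < ln (2:R).
Proof. by rewrite ln_gt0 // ltr1n. Qed.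
End Scal.

Section Prob.
Variables (R : realType) (n : nat) (p : R).

Definition wS (S : {set 'I_n}) : R := p ^+ #|S| * (1 - p) ^+ (n - #|S|).

Lemma prodE (f : 'I_n -> R) :
  \sum_(S : {set 'I_n}) wS S * \prod_(i in S) f i = \prod_i (p * f i + (1 - p)).
Proof.
rewrite bigA_distr; apply: eq_bigr => J _.
rewrite [RHS](bigID (mem J)) /=.
rewrite [X in _ = X * _](eq_bigr (fun i => p * f i)); last by move=> i Hi; rewrite Hi.
rewrite [X in _ = _ * X](eq_bigr (fun i => 1 - p)); last by move=> i Hi; rewrite (negbTE Hi).
rewrite big_split /= prodr_const prodr_const /wS.
have -> : #|[pred i | i \notin J]| = (n - #|J|)%N.
  have H := cardC (mem J); rewrite card_ord in H.
  by rewrite -[X in (X - _)%N]H addKn.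
by rewrite mulrAC -!mulrA.
Qed.

Hypothesis p0 : 0 <= p.
Hypothesis p1 : p <= 1.

Lemma wS_ge0 S : 0 <= wS S.
Proof. by rewrite /wS mulr_ge0 // exprn_ge0 // subr_ge0. Qed.

Lemma wS_sum : \sum_(S : {set 'I_n}) wS S = 1.
Proof.
have := prodE (fun _ => 1); rewrite /=.
rewrite [X in _ = X]big1 => [|i _]; last by rewrite mulr1 addrC subrK.
by under eq_bigr => S _ do rewrite big1_eq mulr1.
Qed.

Lemma sample_probE (E : pred {set 'I_n}) : sample_prob p E = \sum_(S | E S) wS S.
Proof. by []. Qed.

Lemma markov (E : pred {set 'I_n}) (g : {set 'I_n} -> R) :
  (forall S, 0 <= g S) -> (forall S, E S -> 1 <= g S) ->
  sample_prob p E <= \sum_S wS S * g S.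
Proof.
move=> g0 g1; rewrite sample_probE.
apply: (le_trans (y := \sum_(S | E S) wS S * g S)).
  apply: ler_sum => S ES; rewrite -{1}(mulr1 (wS S)); apply: ler_wpM2l => //.
  exact: wS_ge0. exact: g1.
rewrite [X in _ <= X](bigID E) /= lerDl; apply: sumr_ge0 => S _.
by rewrite mulr_ge0 // wS_ge0.
Qed.

Lemma mgf (A : {set 'I_n}) (z : R) :
  \sum_S wS S * z ^+ #|S :&: A| = (p * z + (1 - p)) ^+ #|A|.
Proof.
have := prodE (fun i => if i \in A then z else 1).
have -> : \prod_i (p * (if i \in A then z else 1) + (1 - p)) = (p * z + (1 - p)) ^+ #|A|.
  rewrite (bigID (mem A)) /= (eq_bigr (fun _ => p * z + (1 - p))); last by move=> i ->.
  rewrite prodr_const big1 ?mulr1 //.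
  by move=> i /negbTE ->; rewrite mulr1 addrC subrK.
move=> <-; apply: eq_bigr => S _; congr (_ * _).
rewrite -big_mkcondr /= prodr_const; congr (_ ^+ _).
by apply: eq_card => i; rewrite !inE.
Qed.

Lemma mgf_bound (z : R) m : 0 <= z ->
  (p * z + (1 - p)) ^+ m <= expR (p * (z - 1) * m%:R).
Proof.
move=> z0; rewrite expRM_natr lerXn2r ?nnegrE ?expR_ge0 //.
  by rewrite addr_ge0 ?mulr_ge0 ?subr_ge0.
by have := expR_ge1Dx (p * (z - 1)); rewrite mulrBr mulr1 addrCA addrC.
Qed.

Lemma chernoff (A : {set 'I_n}) (e : R) : 0 < p -> 0 < e < 1 ->
  sample_prob p (fun S : {set 'I_n} =>
    ~~ (((1 - e) * #|A|%:R <= #|S :&: A|%:R / p) &&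
        (#|S :&: A|%:R / p <= (1 + e) * #|A|%:R)))
  <= 2 * expR (- (p * #|A|%:R * e ^+ 2 / 6)).
Proof.
move=> pp /andP[e0 e1]; set w : R := #|A|%:R.
set t1 := e / 2; set t2 := e / 3.
pose X (S : {set 'I_n}) : R := #|S :&: A|%:R.
apply: (le_trans (@markov _
  (fun S => expR (t1 * ((1 - e) * p * w - X S)) +
                 expR (t2 * (X S - (1 + e) * p * w))) _ _)).
- by move=> S; rewrite addr_ge0 ?expR_ge0.
- move=> S; rewrite negb_and -!ltNge ltr_pdivlMr // ltr_pdivrMr // => /orP[] h.
  + rewrite -[X in X <= _]addr0; apply: lerD; last exact: expR_ge0.
    apply: (le_trans _ (expR_ge1Dx _)); rewrite lerDl.
    apply: mulr_ge0; first by rewrite divr_ge0 // ltW.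
    by rewrite subr_ge0 /X (mulrAC _ p); exact: ltW.
  + rewrite -[X in X <= _]add0r; apply: lerD; first exact: expR_ge0.
    apply: (le_trans _ (expR_ge1Dx _)); rewrite lerDl.
    apply: mulr_ge0; first by rewrite divr_ge0 // ltW.
    by rewrite subr_ge0 /X (mulrAC _ p); exact: ltW.
have E1 S : expR (t1 * ((1 - e) * p * w - X S)) =
    expR (t1 * ((1 - e) * p * w)) * (expR (- t1) ^+ #|S :&: A|).
  by rewrite -expRM_natr -expRD; congr expR; rewrite /X; ring.
have E2 S : expR (t2 * (X S - (1 + e) * p * w)) =
    expR (- t2 * ((1 + e) * p * w)) * (expR t2 ^+ #|S :&: A|).
  by rewrite -expRM_natr -expRD; congr expR; rewrite /X; ring.
under eq_bigr => S _ do rewrite E1 E2 mulrDr mulrCA [wS S * (_ * _)]mulrCA.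
rewrite big_split /= -!big_distrr /= !mgf.
apply: (le_trans (y := expR (t1 * ((1 - e) * p * w)) * expR (p * (expR (- t1) - 1) * w) +
   expR (- t2 * ((1 + e) * p * w)) * expR (p * (expR t2 - 1) * w))).
  by apply: lerD; apply: ler_wpM2l; rewrite ?expR_ge0 // mgf_bound // expR_ge0.
rewrite -!expRD mulr_natl mulr2n.
have w0 : 0 <= w by rewrite /w ler0n.
have m0 : 0 <= p * w by rewrite mulr_ge0.
have me : 0 <= p * w * e ^+ 2 by rewrite mulr_ge0 // exprn_ge0 // ltW.
apply: lerD; rewrite ler_expR.
- have t10 : 0 <= t1 by rewrite /t1; lra.
  have h := @expN_le _ _ t10.
  have h2 := ler_wpM2l m0 h.
  rewrite /t1 in h2 *; rewrite expr2 in h2 me *; lra.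
- have h : 0 <= e / 3 <= 1 / 3 by apply/andP; split; lra.
  have h2 := ler_wpM2l m0 (@expP_le _ _ h).
  rewrite /t2 in h2 *; rewrite expr2 in h2 me *; lra.
Qed.

Lemma compl_bound (E : pred {set 'I_n}) d :
  sample_prob p (predC E) <= d -> 1 - d <= sample_prob p E.
Proof.
move=> h; rewrite -wS_sum (bigID E) /= lerBlDr lerD2l.
by move: h; rewrite sample_probE.
Qed.

Lemma union_bound (T : finType) (P : pred T) (Ec : T -> pred {set 'I_n})
    (E : pred {set 'I_n}) :
  (forall S, E S -> exists2 c, P c & Ec c S) ->
  sample_prob p E <= \sum_(c | P c) sample_prob p (Ec c).
Proof.
move=> H.
apply: (le_trans (@markov E (fun S => \sum_(c | P c) ((Ec c S)%:R : R)) _ _)).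
- by move=> S; apply: sumr_ge0 => c _; exact: ler0n.
- move=> S /H [c Pc Ecc]; rewrite (bigD1 c) //= Ecc.
  by rewrite lerDl sumr_ge0 // => *; exact: ler0n.
under eq_bigr => S _ do rewrite big_distrr /=.
rewrite exchange_big /=; apply: ler_sum => c _.
rewrite sample_probE [X in _ <= X]big_mkcond /=; apply: ler_sum => S _.
by case: (Ec c S); rewrite ?mulr1 ?mulr0.
Qed.
End Prob.

Lemma geo (R : realType) (r : R) N : 0 <= r <= 1/2 ->
  \sum_(j < N) r ^+ j.+1 <= 2 * r - 2 * r ^+ N.+1.
Proof.
case/andP=> r0 r1; elim: N => [|N IH]; first by rewrite big_ord0 expr1 subrr.
rewrite big_ord_recr /=; apply: (le_trans (lerD IH (lexx _))).
have x0 : 0 <= r ^+ N.+1 by rewrite exprn_ge0.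
rewrite [r ^+ N.+2]exprS.
have h := ler_wpM2l x0 r1. rewrite (mulrC r) in h *. lra.
Qed.



Lemma ln_log2 (R : realType) (x : R) : ln x = log2 x * ln 2.
Proof. by rewrite /log2 divfK // gt_eqF // ln2_gt0. Qed.

Lemma log2_ge1 (R : realType) (m : nat) : (2 <= m)%N -> 1 <= log2 (m%:R : R).
Proof.
move=> m2; rewrite /log2 ler_pdivlMr ?ln2_gt0 // mul1r ler_ln ?posrE //.
- by rewrite ler_nat.
- by rewrite ltr0n (leq_trans _ m2).
Qed.

Theorem claim4p3 (R : realType) (F : finFieldType) (n k b : nat)
    (eps eta : R) (C : {vspace 'rV[F]_n}) :
  (2 <= k)%N -> 0 < eps < 1 -> 600 <= eta ->
  \dim C = k ->
  (1 <= b)%N ->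
  (forall c : 'rV[F]_n, c \in C -> c != 0 -> (b <= wt c)%N) ->
  (forall alpha : nat, (1 <= alpha)%N ->
     (#|[set c : 'rV[F]_n | (c \in C) && (wt c <= alpha * b)%N]|
        <= (#|F| * k) ^ alpha)%N) ->
  let p := eta * log2 (k%:R : R) * log2 (#|F|%:R : R) / (b%:R * eps ^+ 2) in
  p <= 1 ->
  1 - powR 2 (- ((19 / 100) * eta - 110) * log2 (k%:R : R)) * (k%:R : R) ^- 101
  <= sample_prob p (fun S : {set 'I_n} =>
       [forall c : 'rV[F]_n, (c \in C) ==>
          (((1 - eps) * (wt c)%:R <= (wt_on S c)%:R / p)
           && ((wt_on S c)%:R / p <= (1 + eps) * (wt c)%:R))]).
Proof.
move=> k2 /andP[e0 e1] eta600 dimC b1 minwt count p p1.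
set q := #|F|.
have q2 : (2 <= q)%N := card_finNzRing_gt1 F.
set l := ln (2 : R).
have l0 : 0 < l := ln2_gt0 R.
have l1 : l <= 17/20 := ln2_le R.
set K := log2 (k%:R : R).
set Lq := log2 (q%:R : R).
have K1 : 1 <= K := @log2_ge1 R k k2.
have Lq1 : 1 <= Lq := @log2_ge1 R q q2.
have eta0 : 0 < eta by lra.
have b0 : 0 < (b%:R : R) by rewrite ltr0n.
have pp : 0 < p.
  have K0 : 0 < K by lra.
  have Lq0 : 0 < Lq by lra.
  apply: divr_gt0; first exact: (mulr_gt0 (mulr_gt0 eta0 K0) Lq0).
  exact: (mulr_gt0 b0 (exprn_gt0 _ e0)).
have p0 := ltW pp.
have pb : p * b%:R * eps ^+ 2 = eta * (K * Lq).
  by rewrite /p -mulrA divfK ?mulf_neq0 ?expf_neq0 ?lt0r_neq0 // mulrA.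
set r0 := expR (- (eta * (K * Lq) / 6)).
eapply compl_bound.
pose A (c : 'rV[F]_n) := [set i : 'I_n | c 0 i != 0].
pose al (c : 'rV[F]_n) := (wt c %/ b)%N.
have wt0 : wt (0 : 'rV[F]_n) = 0%N.
  by rewrite /wt; apply/eqP; rewrite cards_eq0; apply/eqP/setP => i; rewrite !inE mxE eqxx.
have wton0 S : wt_on S (0 : 'rV[F]_n) = 0%N.
  by rewrite /wt_on; apply/eqP; rewrite cards_eq0; apply/eqP/setP => i; rewrite !inE mxE eqxx andbF.
apply: (le_trans (@union_bound R n p p0 p1 _ (fun c => (c \in C) && (c != 0))
   (fun c S => ~~ (((1 - eps) * (wt c)%:R <= (wt_on S c)%:R / p)
                   && ((wt_on S c)%:R / p <= (1 + eps) * (wt c)%:R))) _ _)).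
  move=> S /=; move/forallPn => [c]; rewrite negb_imply => /andP[cC H].
  exists c => //; rewrite cC /=; apply/eqP => c0; move: H; rewrite c0 wt0 wton0.
  by rewrite !mulr0 mul0r lexx.
apply: (le_trans (y := \sum_(c | (c \in C) && (c != 0)) 2 * r0 ^+ al c)).
  apply: ler_sum => c /andP[cC c0].
  have -> : sample_prob p (fun S => ~~ (((1 - eps) * (wt c)%:R <= (wt_on S c)%:R / p)
                   && ((wt_on S c)%:R / p <= (1 + eps) * (wt c)%:R))) =
    sample_prob p (fun S : {set 'I_n} => ~~ (((1 - eps) * #|A c|%:R <= #|S :&: A c|%:R / p) &&
         (#|S :&: A c|%:R / p <= (1 + eps) * #|A c|%:R))).
    rewrite /sample_prob; apply: eq_bigl => S.
    rewrite /wt_on /wt (_ : [set i in S | c 0 i != 0] = S :&: A c) //.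
    by apply/setP=> i; rewrite !inE.
  apply: (le_trans (@chernoff R n p p0 p1 (A c) eps pp _)); first by rewrite e0 e1.
  rewrite ler_pM2l // -expRM_natr ler_expR.
  have hal : (al c)%:R * b%:R <= #|A c|%:R :> R by rewrite -natrM ler_nat leq_divM.
  have pe0 : 0 <= p * eps ^+ 2 by rewrite mulr_ge0 // exprn_ge0 // ltW.
  have h := ler_wpM2l pe0 hal.
  have pb' : (al c)%:R * (p * b%:R * eps ^+ 2) = (al c)%:R * (eta * (K * Lq)) by rewrite pb.
  lra.
have alN c : (al c < n.+1)%N.
  rewrite ltnS (leq_trans (leq_div _ _)) //.
  by rewrite /wt -[X in (_ <= X)%N](card_ord n) max_card.
have al1 c : c \in C -> c != 0 -> (0 < al c)%N.
  by move=> cC c0; rewrite /al divn_gt0 // minwt.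
pose g (j : nat) : R := if j == 0%N then 0 else 2 * r0 ^+ j * ((q * k) ^ j.+1)%:R.
rewrite (partition_big (fun c => (inord (al c) : 'I_n.+1)) xpredT) //=.
apply: (le_trans (y := \sum_(j < n.+1) g j)).
  apply: ler_sum => j _.
  rewrite (eq_bigr (fun _ => 2 * r0 ^+ j)); last first.
    by move=> c /andP[_ /eqP <-]; rewrite inordK.
  rewrite sumr_const /g.
  case: eqP => [j0|j0].
    rewrite (_ : #|_| = 0%N) ?mulr0n //; apply: eq_card0 => c /=.
    apply/negP => /andP[/andP[cC c0] /eqP hj].
    have := al1 c cC c0; rewrite -(inordK (alN c)) hj j0 //.
  rewrite -[X in X <= _]mulr_natr ler_pM2l ?mulr_gt0 ?exprn_gt0 ?expR_gt0 // ler_nat.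
  apply: (leq_trans _ (count j.+1 isT)).
  apply: subset_leq_card; apply/subsetP => c; rewrite !inE => /andP[/andP[cC c0] /eqP hj].
  rewrite cC /= ltnW // -hj inordK //.
  by rewrite /al ltn_ceil.
set Q : R := ((q * k)%N)%:R.
set r := Q * r0.
have gE i : g i.+1 = 2 * Q * r ^+ i.+1.
  by rewrite /g /= natrX /r !exprS exprMn; ring.
rewrite big_ord_recl {1}/g eqxx add0r.
under eq_bigr => i _ do rewrite lift0 gE.
rewrite -big_distrr /=.
have Q0 : 0 < Q by rewrite ltr0n muln_gt0 (leq_trans _ q2) // (leq_trans _ k2).
have r0p : 0 < r0 by rewrite expR_gt0.
have lnq : ln (q%:R : R) = Lq * l by rewrite ln_log2.
have lnk : ln (k%:R : R) = K * l by rewrite ln_log2.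
have qpos : (0 : R) < q%:R by rewrite ltr0n (leq_trans _ q2).
have kpos : (0 : R) < k%:R by rewrite ltr0n (leq_trans _ k2).
have hQ : Q = expR (l * (Lq + K)).
  by rewrite -[LHS]lnK ?posrE // /Q natrM lnM ?posrE // lnq lnk mulrDr !(mulrC l).
have hk : k%:R = expR (K * l) by rewrite -lnk lnK // posrE.
have e2 : (2 : R) = expR l by rewrite lnK // posrE.
have hM1 : 1 <= K * Lq by nra.
have hS : Lq + K <= 2 * (K * Lq) by nra.
have hMK : K <= K * Lq by nra.
have h1 : l * (Lq + K) <= l * (2 * (K * Lq)) by rewrite ler_wpM2l // ltW.
have h2 : l * 1 <= l * (K * Lq) by rewrite ler_wpM2l // ltW.
have h3 : l * (K * Lq) <= 1 * (K * Lq) by rewrite ler_wpM2r //; lra.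
have h4 : 600 * (K * Lq) <= eta * (K * Lq) by rewrite ler_wpM2r //; lra.
have rhalf : r <= 1/2.
  have -> : r = expR (l * (Lq + K) - eta * (K * Lq) / 6).
    by rewrite /r hQ /r0 expRD.
  have -> : (1 / 2 : R) = expR (- l) by rewrite expRN -e2 mul1r.
  rewrite ler_expR; lra.
apply: (le_trans (y := 2 * Q * (2 * r))).
  rewrite ler_pM2l ?mulr_gt0 //.
  apply: (le_trans (@geo R r n _)); first by rewrite rhalf mulr_ge0 // ltW.
  by rewrite lerBlDr lerDl mulr_ge0 // exprn_ge0 // mulr_ge0 // ltW.
rewrite [X in X <= _](_ : _ = expR (l + l + l * (Lq + K) + l * (Lq + K) - eta * (K * Lq) / 6)); last first.
  rewrite !expRD -e2 -hQ; rewrite /r /r0; ring.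
rewrite [X in _ <= X](_ : _ = expR ((- (19 / 100 * eta - 110) * K) * l - K * l * 101%:R)); last first.
  rewrite expRD expRN hk -expRM_natr /powR gt_eqF //.
have h5 : 0 <= (eta / 6 - 4 * l) * (K * Lq - K) by rewrite mulr_ge0 //; lra.
have h6 : 0 <= (eta * K) * (1 / 6 - 19 / 100 * l) by rewrite mulr_ge0 //; nra.
have h7 : 0 <= l * (K - 1) by rewrite mulr_ge0 //; lra.
rewrite ler_expR; nra.
Qed.
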